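(* For a semiring $(S,+,\cdot)$ the following are equivalent: (i) $S$ is a b-lattice of nil-extensions of rectangular skew-rings; (ii) $S$ is a quasi completely regular semiring and for all $e,f\in E^+(S)$ there exists a positive integer $n$ such that $n(e+f)=(n+1)(e+f)$; (iii) $S$ is additively quasi regular, $b^2\,\mathscr{H}^{*^{+}}\,b$ for all $b\in S$, and for all $a,x\in S$, $a=a+x+a$ implies $a=a+2x+2a$.
   Context: A semiring $(S,+,\cdot)$ has two associative operations with $a(b+c)=ab+ac$, $(b+c)a=ba+ca$. For a positive integer $n$, $na=a+\dots+a$ ($n$ terms); $b^2=b\cdot b$. $E^+(S)$ is the set of additive idempotents. $a$ is additively regular if $a=a+x+a$ for some $x\in S$; $S$ is additively quasi regular if for each $a$ some $na$ is additively regular. $a$ is completely regular if there is $x$ with $a=a+x+a$, $a+x=x+a$, $a(a+x)=a+x$; $S$ is quasi completely regular if for each $a\in S$ some $na$ is completely regular. Green's relations of $(S,+)$ are denoted $\mathscr{L}^+,\mathscr{R}^+,\mathscr{J}^+,\mathscr{H}^+$. For additively quasi regular $S$ and $a\in S$, let $m(a)$ be the least positive integer with $m(a)a$ additively regular; define $a\,\mathscr{L}^{*^{+}}\,b$ iff $m(a)a\,\mathscr{L}^+\,m(b)b$, $a\,\mathscr{R}^{*^{+}}\,b$ iff $m(a)a\,\mathscr{R}^+\,m(b)b$, and $\mathscr{H}^{*^{+}}=\mathscr{L}^{*^{+}}\cap\mathscr{R}^{*^{+}}$. A completely simple semiring is a semiring in which every element is completely regular and $\mathscr{J}^+=S\times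 S$. A rectangular skew-ring is a completely simple semiring $K$ with $E^+(K)$ a subsemigroup of $(K,+)$. A semiring $S$ is a nil-extension of a subsemiring $K$ if $K$ is a bi-ideal of $S$ (for $a\in K$, $x\in S$: $a+x,x+a,ax,xa\in K$) and for every $a\in S$ there is $n\ge1$ with $na\in K$. A b-lattice is a semiring with $(S,\cdot)$ a band and $(S,+)$ a semilattice. $S$ is a b-lattice of semirings of a given class if there is a congruence $\rho$ on $S$ with $S/\rho$ a b-lattice and every $\rho$-class a subsemiring of that class. *)

(* Defs.v *)
Record semiring := Semiring {
  car :> Type;
  sadd : car -> car -> car;
  smul : car -> car -> car;
  sadd_assoc : forall a b c, sadd a (sadd b c) = sadd (sadd a b) c;
  smul_assoc : forall a b c, smul a (smul b c) = smul (smul a b) c;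
  smul_addr : forall a b c, smul a (sadd b c) = sadd (smul a b) (smul a c);
  smul_addl : forall a b c, smul (sadd b c) a = sadd (smul b a) (smul c a)
}.

Arguments sadd {s} _ _.
Arguments smul {s} _ _.

Declare Scope sr_scope.
Delimit Scope sr_scope with sr.
Infix "+" := sadd : sr_scope.
Infix "*" := smul : sr_scope.
Local Open Scope sr_scope.

Section Defs.
Variable S : semiring.

(* nmul' k a = (k+1) a = a + ... + a  (k+1 terms) *)
Fixpoint nmul' (k : nat) (a : S) : S :=
  match k with O => a | Datatypes.S k' => a + nmul' k' a end.

(* n a for a positive integer n (only used with 0 < n; nmul 0 a = a is junk). *)
Definition nmul (n : nat) (a : S) : S := nmul' (Nat.pred n) a.

Definition add_idem (e : S) : Prop := e + e = e.

Definition add_regular (a : S) : Prop := exists x : S, a = a + x + a.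

Definition add_quasi_regular : Prop :=
  forall a : S, exists n, 0 < n /\ add_regular (nmul n a).

Definition compl_regular_in (K : S -> Prop) (a : S) : Prop :=
  exists x : S, K x /\ a = a + x + a /\ a + x = x + a /\ a * (a + x) = a + x.

Definition compl_regular (a : S) : Prop := compl_regular_in (fun _ => True) a.

Definition quasi_compl_regular : Prop :=
  forall a : S, exists n, 0 < n /\ compl_regular (nmul n a).

Definition Lplus (a b : S) : Prop :=
  (a = b \/ exists x, a = x + b) /\ (b = a \/ exists y, b = y + a).
Definition Rplus (a b : S) : Prop :=
  (a = b \/ exists x, a = b + x) /\ (b = a \/ exists y, b = a + y).
Definition Hplus (a b : S) : Prop := Lplus a b /\ Rplus a b.

Definition is_m (a : S) (n : nat) : Prop :=
  0 < n /\ add_regular (nmul n a) /\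
  forall k, 0 < k -> add_regular (nmul k a) -> n <= k.

Definition Lstar (a b : S) : Prop :=
  exists m n, is_m a m /\ is_m b n /\ Lplus (nmul m a) (nmul n b).
Definition Rstar (a b : S) : Prop :=
  exists m n, is_m a m /\ is_m b n /\ Rplus (nmul m a) (nmul n b).
Definition Hstar (a b : S) : Prop := Lstar a b /\ Rstar a b.

Definition subsemiring (K : S -> Prop) : Prop :=
  (exists a, K a) /\ (forall a b, K a -> K b -> K (a + b) /\ K (a * b)).

(* a is in K^1 + b + K^1 (ideal generated by b in the semigroup (K,+)) *)
Definition in_J_ideal (K : S -> Prop) (a b : S) : Prop :=
  a = b \/ (exists x, K x /\ a = x + b) \/ (exists y, K y /\ a = b + y)
  \/ (exists x y, K x /\ K y /\ a = x + b + y).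

Definition Jplus_universal (K : S -> Prop) : Prop :=
  forall a b, K a -> K b -> in_J_ideal K a b /\ in_J_ideal K b a.

Definition completely_simple (K : S -> Prop) : Prop :=
  subsemiring K /\ (forall a, K a -> compl_regular_in K a) /\ Jplus_universal K.

Definition rect_skew_ring (K : S -> Prop) : Prop :=
  completely_simple K /\
  (forall e f, K e -> K f -> add_idem e -> add_idem f -> add_idem (e + f)).

Definition nil_extension (T K : S -> Prop) : Prop :=
  subsemiring T /\ subsemiring K /\ (forall a, K a -> T a) /\
  (forall a x, K a -> T x -> K (a + x) /\ K (x + a) /\ K (a * x) /\ K (x * a)) /\
  (forall a, T a -> exists n, 0 < n /\ K (nmul n a)).

Definition congruence (rho : S -> S -> Prop) : Prop :=
  (forall a, rho a a) /\ (forall a b, rho a b -> rho b a) /\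
  (forall a b c, rho a b -> rho b c -> rho a c) /\
  (forall a b c, rho a b -> rho (a + c) (b + c) /\ rho (c + a) (c + b)
                         /\ rho (a * c) (b * c) /\ rho (c * a) (c * b)).

(* S/rho is a b-lattice: (S/rho,.) a band and (S/rho,+) a semilattice *)
Definition quotient_b_lattice (rho : S -> S -> Prop) : Prop :=
  (forall a, rho (a * a) a) /\ (forall a, rho (a + a) a) /\
  (forall a b, rho (a + b) (b + a)).

Definition b_lattice_nilext_rsr : Prop :=
  exists rho : S -> S -> Prop,
    congruence rho /\ quotient_b_lattice rho /\
    forall a : S,
      subsemiring (rho a) /\
      exists K : S -> Prop, rect_skew_ring K /\ nil_extension (rho a) K.

End Defs.

Arguments nmul {S} _ _.
Arguments add_idem {S} _.
Arguments add_quasi_regular S : clear implicits.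
Arguments quasi_compl_regular S : clear implicits.
Arguments Hstar {S} _ _.
Arguments b_lattice_nilext_rsr S : clear implicits.

(* Main.v *)
Require Import Defs.
From Stdlib Require Import Arith Lia Classical.
Local Open Scope sr_scope.

Ltac nrm := repeat rewrite sadd_assoc.
Ltac ac := nrm; reflexivity.

Section Main.
Variable R : semiring.
Implicit Types a b c d e f g h p q r s t u v w x y z : R.


Notation mp := (nmul' R).

Lemma mp_S k a : mp (S k) a = a + mp k a.
Proof. reflexivity. Qed.

Lemma mp_Sr k a : mp (S k) a = mp k a + a.
Proof. induction k. reflexivity. rewrite (mp_S (S k)), IHk, sadd_assoc, <- mp_S, IHk. reflexivity. Qed.

Lemma mp_add j k a : mp (j + k + 1)%nat a = mp j a + mp k a.
Proof.
  induction j; simpl.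
  - rewrite Nat.add_1_r. reflexivity.
  - rewrite IHj. ac.
Qed.

Lemma mp_mulr k a x : mp k a * x = mp k (a * x).
Proof. induction k; simpl. reflexivity. rewrite smul_addl, IHk. reflexivity. Qed.

Lemma mp_mull k a x : x * mp k a = mp k (x * a).
Proof. induction k; simpl. reflexivity. rewrite smul_addr, IHk. reflexivity. Qed.

Lemma mp_idem k e : e + e = e -> mp k e = e.
Proof. intro He. induction k; simpl. reflexivity. rewrite IHk. exact He. Qed.

Lemma mp_mp j k a : mp j (mp k a) = mp (j*k + j + k)%nat a.
Proof.
  induction j; simpl.
  - reflexivity.
  - rewrite IHj. replace (k + j * k + S j + k)%nat with (k + (j*k+j+k) + 1)%nat by lia.
    rewrite mp_add. reflexivity.
Qed.

Lemma mp_commute k a b : a + b = b + a -> b + mp k a = mp k a + b.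
Proof.
  intro H. induction k; simpl. symmetry; exact H.
  rewrite sadd_assoc, <- H, <- sadd_assoc, IHk. ac.
Qed.

Lemma mp_sum k a b : a + b = b + a -> mp k (a + b) = mp k a + mp k b.
Proof.
  intro H. induction k; simpl. reflexivity.
  rewrite IHk. 
  replace (a + b + (mp k a + mp k b)) with (a + (b + mp k a) + mp k b) by ac.
  rewrite (mp_commute k a b H). ac.
Qed.

Lemma mp_prod j k a b : mp j a * mp k b = mp (j*k + j + k)%nat (a * b).
Proof. rewrite mp_mulr, mp_mull, mp_mp. reflexivity. Qed.

Lemma nmul_mp n a : nmul (S n) a = mp n a.
Proof. reflexivity. Qed.

End Main.


Section Q.
Variable R : semiring.
Implicit Types a b c d e f g h p q r s t u v w x y z : R.
Notation mp := (nmul' R).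

Lemma lid s u w : s + s = s -> u = s + w -> s + u = u.
Proof. intros Hs Hu. rewrite Hu, sadd_assoc, Hs. reflexivity. Qed.
Lemma rid s u w : s + s = s -> u = w + s -> u + s = u.
Proof. intros Hs Hu. rewrite Hu, <- sadd_assoc, Hs. reflexivity. Qed.

Lemma mp_lfix f a k : f + a = a -> f + mp k a = mp k a.
Proof. intro H. destruct k; simpl. exact H. rewrite sadd_assoc, H. reflexivity. Qed.
Lemma mp_rfix g a k : a + g = a -> mp k a + g = mp k a.
Proof. intro H. destruct k. exact H. rewrite mp_Sr, <- sadd_assoc, H. reflexivity. Qed.

Hypothesis Hq : quasi_compl_regular R.

Lemma idem_sq e : add_idem e -> e * e = e.
Proof.
  intro He. destruct (Hq e) as [n [Hn [x [_ [H1 [H2 H3]]]]]].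
  destruct n as [|n]; [lia|].
  change (nmul (S n) e) with (mp n e) in *. rewrite mp_idem in H1, H2, H3 by exact He.
  assert (E: e + x = e).
  { transitivity (e + (e + x)). rewrite sadd_assoc, He; reflexivity.
    rewrite H2, sadd_assoc; symmetry; exact H1. }
  rewrite E in H3. exact H3.
Qed.

Lemma pireg a : exists k y, mp k a = mp k a + y + mp k a /\ mp k a + y = y + mp k a
   /\ mp k a * (mp k a + y) = mp k a + y.
Proof.
  destruct (Hq a) as [n [Hn [y [_ H]]]]. destruct n as [|n]; [lia|].
  exists n, y. exact H.
Qed.

Lemma gv a x0 : a = a + x0 + a -> exists y, a = a + y + a /\ a + y = y + a.
Proof.
  intro H0.
  set (x := x0 + a + x0).
  assert (A1 : a = a + x + a). { unfold x. rewrite H0 at 1. rewrite H0 at 1. ac. }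
  assert (A2 : x = x + a + x). { unfold x. replace (x0 + a + x0 + a + (x0 + a + x0)) with (x0 + (a + x0 + a) + (x0 + a + x0)) by ac. rewrite <- H0.
    replace (x0 + a + (x0 + a + x0)) with (x0 + (a + x0 + a) + x0) by ac. rewrite <- H0. reflexivity. }
  clearbody x. clear H0 x0.
  set (f := a + x). set (g := x + a).
  assert (Fi : f + f = f). { unfold f. replace (a + x + (a + x)) with (a + x + a + x) by ac. rewrite <- A1. reflexivity. }
  assert (Gi : g + g = g). { unfold g. replace (x + a + (x + a)) with (x + (a + x + a)) by ac. rewrite <- A1. reflexivity. }
  assert (FA : f + a = a). { unfold f. symmetry. exact A1. }
  assert (AG : a + g = a). { unfold g. rewrite sadd_assoc. symmetry. exact A1. }
  assert (FF : f * f = f) by (apply idem_sq; exact Fi).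
  assert (GG : g * g = g) by (apply idem_sq; exact Gi).
  destruct (pireg a) as [k [y [P1 [P2 _]]]].
  set (p := mp k a) in *. set (e := p + y).
  assert (Ei : e + e = e). { unfold e. rewrite sadd_assoc, <- P1. reflexivity. }
  assert (EP : e + p = p). { unfold e. symmetry. exact P1. }
  assert (PE : p + e = p). { unfold e. rewrite P2, sadd_assoc. symmetry. exact P1. }
  assert (FP : f + p = p) by (apply mp_lfix; exact FA).
  assert (PG : p + g = p) by (apply mp_rfix; exact AG).
  assert (FE : f + e = e). { unfold e. rewrite sadd_assoc, FP. reflexivity. }
  assert (EG : e + g = e). { unfold e. rewrite P2. rewrite <- sadd_assoc, PG. reflexivity. }
  assert (AFR1 : f + a * f = a * f).
  { transitivity ((f + a) * f). rewrite smul_addl, FF; reflexivity. rewrite FA; reflexivity. }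
  assert (AFR2 : f = a * f + x * f). { rewrite <- FF at 1. unfold f at 1. rewrite smul_addl. reflexivity. }
  assert (EFR1 : f + e * f = e * f).
  { transitivity ((f + e) * f). rewrite smul_addl, FF; reflexivity. rewrite FE; reflexivity. }
  assert (PF : p * f = a * f).
  { unfold p. rewrite mp_mulr. apply mp_idem. rewrite <- smul_addr, Fi. reflexivity. }
  assert (AFEF : e * f + a * f = a * f).
  { rewrite <- PF. rewrite <- smul_addl, EP. reflexivity. }
  assert (BX : e * a + e * x = e * f). { unfold f. rewrite smul_addr. reflexivity. }
  assert (EFB : e * f + e * a = e * a). { rewrite <- smul_addr, FA. reflexivity. }
  assert (AGL1 : a * g + g = a * g).
  { transitivity ((a + g) * g). rewrite smul_addl, GG; reflexivity. rewrite AG; reflexivity. }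
  assert (AGL2 : g = x * g + a * g). { rewrite <- GG at 1. unfold g at 1. rewrite smul_addl. reflexivity. }
  assert (EGL1 : e * g + g = e * g).
  { transitivity ((e + g) * g). rewrite smul_addl, GG; reflexivity. rewrite EG; reflexivity. }
  assert (PGm : p * g = a * g).
  { unfold p. rewrite mp_mulr. apply mp_idem. rewrite <- smul_addr, Gi. reflexivity. }
  assert (AGEG : a * g + e * g = a * g).
  { rewrite <- PGm. rewrite <- smul_addl, PE. reflexivity. }
  assert (XB : e * x + e * a = e * g). { unfold g. rewrite smul_addr. reflexivity. }
  assert (BEG : e * a + e * g = e * a). { rewrite <- smul_addr, AG. reflexivity. }
  set (b := e * a) in *.
  assert (FB : f + b = b).
  { apply (lid f b (e * f + b) Fi). rewrite sadd_assoc, EFR1, EFB. reflexivity. }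
  assert (BG : b + g = b).
  { apply (rid g b (b + e * g) Gi). rewrite <- sadd_assoc, EGL1, BEG. reflexivity. }
  assert (Bi : b + b = b). { unfold b. rewrite <- smul_addl, Ei. reflexivity. }
  assert (BA : b + a = a).
  { apply (lid b a (e * x + a * f + x * f + a) Bi).
    transitivity (f + a). symmetry; exact FA.
    transitivity (a * f + x * f + a). rewrite <- AFR2; reflexivity.
    transitivity (e * f + a * f + x * f + a). rewrite AFEF; reflexivity.
    rewrite <- BX. ac. }
  assert (AB : a + b = a).
  { apply (rid b a (a + x * g + a * g + e * x) Bi).
    transitivity (a + g). symmetry; exact AG.
    transitivity (a + (x * g + a * g)). rewrite <- AGL2; reflexivity.
    transitivity (a + (x * g + (a * g + e * g))). rewrite AGEG; reflexivity.
    rewrite <- XB. ac. }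
  exists (b + x + b). split.
  - replace (a + (b + x + b) + a) with ((a + b) + x + (b + a)) by ac. rewrite AB, BA. exact A1.
  - replace (a + (b + x + b)) with ((a + b) + x + b) by ac.
    replace (b + x + b + a) with (b + (x + (b + a))) by ac.
    rewrite AB, BA. fold f. fold g. rewrite FB. symmetry. exact BG.
Qed.

End Q.


Section Dv.
Variable R : semiring.
Implicit Types a b c d e f g h p q r s t u v w x y z : R.
Notation mp := (nmul' R).

Hypothesis Hq : quasi_compl_regular R.
Hypothesis Hgv : forall a x, a = a + x + a -> exists y, a = a + y + a /\ a + y = y + a.

Definition dv a b := exists n s t, mp n b = s + a + t.

Lemma dv_refl a : dv a a.
Proof. exists 2, a, a. simpl. ac. Qed.

Lemma dv_midl u a b : dv (u + a) b -> dv a b.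
Proof. intros [n [s [t H]]]. exists n, (s + u), t. rewrite H. ac. Qed.
Lemma dv_midr a v b : dv (a + v) b -> dv a b.
Proof. intros [n [s [t H]]]. exists n, s, (v + t). rewrite H. ac. Qed.
Lemma dv_mid u a v b : dv (u + a + v) b -> dv a b.
Proof. intro H. apply dv_midl with u. apply dv_midr with v. exact H. Qed.

Lemma dv_l a b : dv a (a + b).
Proof. exists 2, (a + b), (b + (a + b)). simpl. ac. Qed.
Lemma dv_r a b : dv b (a + b).
Proof. exists 1, a, (a + b). simpl. ac. Qed.
Lemma dv_sw a b : dv (a + b) (b + a).
Proof. exists 1, b, a. simpl. ac. Qed.

Lemma dv_mulr a b c : dv a b -> dv (a * c) (b * c).
Proof. intros [n [s [t H]]]. exists n, (s * c), (t * c). rewrite <- mp_mulr, H, !smul_addl. reflexivity. Qed.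
Lemma dv_mull a b c : dv a b -> dv (c * a) (c * b).
Proof. intros [n [s [t H]]]. exists n, (c * s), (c * t). rewrite <- mp_mull, H, !smul_addr. reflexivity. Qed.

Lemma mp_idx_eq j k a : mp j a = mp k a -> mp j a = mp j a.
Proof. auto. Qed.

Lemma pu_idem E a u v : E + E = E -> E = u + a + v -> exists u' v', E = u' + (a + a) + v'.
Proof.
  intros HE H.
  set (hh := a + v + E + u).
  assert (Hh : hh + hh = hh).
  { unfold hh. replace (a + v + E + u + (a + v + E + u)) with (a + v + E + (u + a + v) + E + u) by ac.
    rewrite <- H. replace (a + v + E + E + E + u) with (a + v + (E + E + E) + u) by ac. rewrite !HE. reflexivity. }
  set (p := hh + a).
  assert (Hp : p = p + (v + E + u) + p).
  { unfold p. replace (hh + a + (v + E + u) + (hh + a)) with (hh + (a + v + E + u) + hh + a) by ac.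
    fold hh. rewrite !Hh. reflexivity. }
  assert (HE2 : E = u + p + v).
  { transitivity (E + E + E). rewrite !HE; reflexivity.
    transitivity ((u + a + v) + E + (u + a + v)). rewrite <- H. reflexivity.
    unfold p, hh. ac. }
  destruct (Hgv p (v + E + u) Hp) as [y [Y1 Y2]].
  assert (Hpp : p = p + p + y). { rewrite <- sadd_assoc, Y2, sadd_assoc. exact Y1. }
  exists (u + (a + v + E + u)), (v + E + u + a + y + v).
  rewrite HE2 at 1. rewrite Hpp. unfold p, hh. ac.
Qed.

Lemma mp_head j w : exists r, mp (S j) w = w + r.
Proof. exists (mp j w). reflexivity. Qed.

Lemma dv_pu a b : dv a b -> dv (a + a) b.
Proof.
  intros [n [s [t H]]].
  destruct (pireg R Hq (mp n b)) as [j [z [P1 [P2 _]]]].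
  set (P := mp j (mp n b)) in *.
  set (E := P + z).
  assert (HE : E + E = E). { unfold E. rewrite sadd_assoc, <- P1. reflexivity. }
  assert (EP : E + P = P). { unfold E. symmetry. exact P1. }
  assert (HEx : exists u v, E = u + a + v).
  { assert (E1 : E = E + P + z). { unfold E. rewrite <- P1. reflexivity. }
    destruct j as [|j].
    - exists (E + s), (t + z). rewrite E1 at 1. unfold P. simpl. rewrite H. ac.
    - exists (E + s), (t + mp j (mp n b) + z). rewrite E1 at 1. unfold P. rewrite mp_S, H. ac. }
  destruct HEx as [u [v HE1]].
  destruct (pu_idem E a u v HE HE1) as [u' [v' HE2]].
  exists (j * n + j + n)%nat, u', (v' + P).
  rewrite <- mp_mp. fold P. rewrite <- EP at 1. rewrite HE2. ac.
Qed.

Lemma dv_pow2 a b m : dv a b -> dv (mp (2 ^ m - 1) a) b.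
Proof.
  intro H. induction m.
  - simpl. exact H.
  - apply dv_pu in IHm. rewrite <- mp_add in IHm.
    replace (2 ^ S m - 1)%nat with (2 ^ m - 1 + (2 ^ m - 1) + 1)%nat. exact IHm.
    simpl. assert (0 < 2 ^ m)%nat by (apply Nat.neq_0_lt_0, Nat.pow_nonzero; lia). lia.
Qed.

Lemma dv_mono a b j k : (j <= k)%nat -> dv (mp k a) b -> dv (mp j a) b.
Proof.
  intros Hjk H. destruct (Nat.eq_dec j k) as [->|Hne]. exact H.
  replace k with (j + (k - j - 1) + 1)%nat in H by lia. rewrite mp_add in H.
  apply dv_midr in H. exact H.
Qed.

Lemma dv_pow a b k : dv a b -> dv (mp k a) b.
Proof.
  intro H. apply dv_mono with (2 ^ k - 1)%nat.
  - assert (k < 2 ^ k)%nat by (apply Nat.pow_gt_lin_r; lia). lia.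
  - apply dv_pow2. exact H.
Qed.

Lemma dv_trans a b c : dv a b -> dv b c -> dv a c.
Proof.
  intros [n [s [t H]]] Hbc.
  apply (dv_pow b c (S (S n))) in Hbc.
  rewrite mp_S, mp_Sr, H in Hbc.
  apply (dv_mid (b + s) a (t + b)). replace (b + s + a + (t + b)) with (b + (s + a + t + b)) by ac. exact Hbc.
Qed.

Lemma dv_meet x y z : dv x z -> dv y z -> dv (x + y) z.
Proof.
  intros [n [s [t H1]]] [m [s' [t' H2]]].
  assert (H : dv (x + (t + s') + y) z).
  { exists (n + m + 1)%nat, s, t'. rewrite mp_add, H1, H2. ac. }
  apply dv_pu in H.
  assert (H3 : dv (y + x) z).
  { apply (dv_mid (x + (t + s')) (y + x) (t + s' + y)). 
    replace (x + (t + s') + (y + x) + (t + s' + y)) with (x + (t + s') + y + (x + (t + s') + y)) by ac. exact H. }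
  apply dv_pu in H3. apply (dv_mid y (x + y) x).
  replace (y + (x + y) + x) with (y + x + (y + x)) by ac. exact H3.
Qed.

Lemma dv_mp_l a k : dv (mp k a) a.
Proof. exists (S (S k)), a, a. rewrite mp_S, mp_Sr. ac. Qed.

Lemma dv_mp_r a k : dv a (mp k a).
Proof.
  destruct k as [|k]. apply dv_refl.
  exists 2, (mp (S k) a), (mp k a + mp (S k) a). simpl. ac.
Qed.

End Dv.


Section Cons.
Variable R : semiring.
Implicit Types a b c d e f g h p q r s t u v w x y z : R.
Notation mp := (nmul' R).

Hypothesis Hq : quasi_compl_regular R.
Hypothesis Hgv : forall a x, a = a + x + a -> exists y, a = a + y + a /\ a + y = y + a.
Hypothesis Hid : forall e f, e + e = e -> f + f = f ->
  (exists y, e + f = e + f + y + (e + f) /\ e + f + y = y + (e + f)) -> e + f + (e + f) = e + f.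

Let dtr := dv_trans R Hq Hgv.
Let dme := dv_meet R Hq Hgv.
Let dpu := dv_pu R Hq Hgv.

Definition rh a b := dv R a b /\ dv R b a.

Lemma rh_refl a : rh a a.
Proof. split; apply dv_refl. Qed.
Lemma rh_sym a b : rh a b -> rh b a.
Proof. intros [H1 H2]; split; assumption. Qed.
Lemma rh_trans a b c : rh a b -> rh b c -> rh a c.
Proof. intros [H1 H2] [H3 H4]; split; eapply dtr; eassumption. Qed.

Lemma dv_addr a b c : dv R a b -> dv R (a + c) (b + c).
Proof. intro H. apply dme. apply dtr with b. exact H. apply dv_l. apply dv_r. Qed.
Lemma dv_addl a b c : dv R a b -> dv R (c + a) (c + b).
Proof. intro H. apply dme. apply dv_l. apply dtr with b. exact H. apply dv_r. Qed.

Lemma rh_addr a b c : rh a b -> rh (a + c) (b + c).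
Proof. intros [H1 H2]; split; apply dv_addr; assumption. Qed.
Lemma rh_addl a b c : rh a b -> rh (c + a) (c + b).
Proof. intros [H1 H2]; split; apply dv_addl; assumption. Qed.
Lemma rh_mulr a b c : rh a b -> rh (a * c) (b * c).
Proof. intros [H1 H2]; split; apply dv_mulr; assumption. Qed.
Lemma rh_mull a b c : rh a b -> rh (c * a) (c * b).
Proof. intros [H1 H2]; split; apply dv_mull; assumption. Qed.

Lemma rh_aa a : rh (a + a) a.
Proof. split. exists 3, a, a. simpl. ac. apply dv_l. Qed.
Lemma rh_comm a b : rh (a + b) (b + a).
Proof. split; apply dv_sw. Qed.

Lemma rh_mp a k : rh a (mp k a).
Proof. split. apply dv_mp_r. apply dv_mp_l. Qed.

Lemma ex_idem a : exists e, e + e = e /\ rh a e.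
Proof.
  destruct (pireg R Hq a) as [k [z [P1 [P2 _]]]].
  set (Q := mp k a) in *.
  exists (Q + z). split.
  - rewrite sadd_assoc, <- P1. reflexivity.
  - apply rh_trans with Q. apply rh_mp.
    split.
    + exists 1, (Q + z), z. simpl. ac.
    + exists 1, Q, Q. transitivity (Q + (Q + z + Q)). simpl. rewrite <- P1. reflexivity. ac.
Qed.

Lemma rh_sq a : rh (a * a) a.
Proof.
  destruct (ex_idem a) as [e [He Hae]].
  apply rh_trans with (e * a). apply rh_mulr. exact Hae.
  apply rh_trans with (e * e). apply rh_mull. exact Hae.
  rewrite (idem_sq R Hq e He). apply rh_sym. exact Hae.
Qed.

Lemma st_iter b s q : b = s + b + q -> forall k, b = mp k s + b + mp k q.
Proof.
  intros H k. induction k. exact H.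
  transitivity (mp k s + b + mp k q). exact IHk.
  rewrite H at 1. rewrite mp_Sr, mp_S. ac.
Qed.

Lemma st_R b s q : b = s + b + q -> exists r, b = b + q + r.
Proof.
  intro H. destruct (pireg R Hq q) as [k [z [P1 [P2 _]]]].
  set (Q := mp k q) in *.
  assert (B1 : b = mp k s + b + Q) by (apply st_iter; exact H).
  assert (QE : Q + (Q + z) = Q). { rewrite P2, sadd_assoc. symmetry. exact P1. }
  assert (BE : b = b + (Q + z)). { rewrite B1 at 2. rewrite <- sadd_assoc, QE. exact B1. }
  destruct k as [|k].
  - exists z. rewrite BE at 1. unfold Q. simpl. ac.
  - exists (mp k q + z). rewrite BE at 1. unfold Q. rewrite mp_S. ac.
Qed.

Lemma st_L b s q : b = q + b + s -> exists r, b = r + q + b.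
Proof.
  intro H. destruct (pireg R Hq q) as [k [z [P1 [P2 _]]]].
  set (Q := mp k q) in *.
  assert (B1 : b = Q + b + mp k s) by (apply st_iter; exact H).
  assert (EQ : Q + z + Q = Q) by (symmetry; exact P1).
  assert (BE : b = (Q + z) + b). { rewrite B1 at 2. rewrite sadd_assoc, sadd_assoc, EQ. exact B1. }
  destruct k as [|k].
  - exists z. rewrite BE at 1. rewrite P2. unfold Q. simpl. ac.
  - exists (z + mp k q). rewrite BE at 1. rewrite P2. unfold Q. rewrite mp_Sr. ac.
Qed.

Lemma gv_idem_mp b y n : b = b + y + b -> b + y = y + b ->
  b + y = mp n b + mp n y /\ b + y = mp n y + mp n b.
Proof.
  intros H1 H2.
  assert (Hi : (b + y) + (b + y) = b + y). { rewrite sadd_assoc, <- H1. reflexivity. }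
  split.
  - rewrite <- mp_sum by exact H2. symmetry. apply mp_idem. exact Hi.
  - rewrite H2. rewrite <- mp_sum by (symmetry; exact H2). symmetry. apply mp_idem. rewrite <- H2. exact Hi.
Qed.

Lemma bi_r b t : add_regular R b -> dv R (b + t) b -> add_regular R (b + t).
Proof.
  intros [x Hx] [n [s [u Hd]]].
  destruct (Hgv b x Hx) as [y [Y1 Y2]].
  destruct (gv_idem_mp b y n Y1 Y2) as [_ E2].
  assert (B : b = (mp n y + s) + b + (t + u + b)).
  { transitivity (b + y + b). exact Y1. rewrite E2, Hd. ac. }
  destruct (st_R _ _ _ B) as [r Hr].
  exists (u + b + r + y). 
  transitivity (b + y + b + t). rewrite <- Y1. reflexivity.
  rewrite Hr at 1. ac.
Qed.

Lemma bi_l b t : add_regular R b -> dv R (t + b) b -> add_regular R (t + b).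
Proof.
  intros [x Hx] [n [s [u Hd]]].
  destruct (Hgv b x Hx) as [y [Y1 Y2]].
  destruct (gv_idem_mp b y n Y1 Y2) as [E1 _].
  assert (B : b = (b + s + t) + b + (u + mp n y)).
  { transitivity (b + (y + b)). rewrite sadd_assoc. exact Y1. rewrite <- Y2, E1, Hd. ac. }
  destruct (st_L _ _ _ B) as [r Hr].
  exists (y + r + b + s).
  transitivity (t + (b + y + b)). rewrite <- Y1. reflexivity.
  rewrite Hr at 2. ac.
Qed.

Lemma reg_mulr b t : add_regular R b -> add_regular R (b * t).
Proof. intros [x Hx]. exists (x * t). rewrite <- !smul_addl, <- Hx. reflexivity. Qed.
Lemma reg_mull b t : add_regular R b -> add_regular R (t * b).
Proof. intros [x Hx]. exists (t * x). rewrite <- !smul_addr, <- Hx. reflexivity. Qed.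

Lemma qm b y : b = b + y + b -> b + y = y + b -> b * (b + y) = b + y.
Proof.
  intros Y1 Y2.
  destruct (Hq b) as [n [Hn [z [_ [P1 [P2 P3]]]]]].
  destruct n as [|n]; [lia|]. change (nmul (S n) b) with (mp n b) in *.
  set (Q := mp n b) in *. set (h := b + y). set (E := Q + z).
  destruct (gv_idem_mp b y n Y1 Y2) as [H1 H2]. fold h Q in H1, H2.
  assert (EQ : E + Q = Q) by (symmetry; exact P1).
  assert (QE : Q + E = Q). { unfold E. rewrite P2, sadd_assoc. symmetry. exact P1. }
  assert (HB : h + b = b). { unfold h. symmetry. exact Y1. }
  assert (HQ : h + Q = Q) by (unfold Q; apply mp_lfix; exact HB).
  assert (HE1 : h + E = E). { unfold E. rewrite sadd_assoc, HQ. reflexivity. }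
  assert (HE2 : h + E = h). { rewrite H2 at 1. rewrite <- sadd_assoc, QE. symmetry. exact H2. }
  assert (EH' : E = h). { rewrite <- HE1. exact HE2. }
  assert (Ei : E + E = E). { unfold E. rewrite sadd_assoc, <- P1. reflexivity. }
  assert (BE : b * E = E).
  { assert (BEi : b * E + b * E = b * E) by (rewrite <- smul_addr, Ei; reflexivity).
    rewrite <- (mp_idem R n (b * E) BEi). rewrite <- mp_mulr. fold Q. exact P3. }
  fold h. rewrite <- EH'. exact BE.
Qed.


Lemma idem_reg e : e + e = e -> add_regular R e.
Proof. intro He. exists e. rewrite !He. reflexivity. Qed.

Lemma idem_sum e f : e + e = e -> f + f = f -> add_regular R (e + f) -> (e + f) + (e + f) = e + f.
Proof. intros He Hf [x Hx]. apply Hid; try assumption. apply Hgv with x. exact Hx. Qed.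

Lemma rb u w : u + u = u -> w + w = w -> rh u w -> u + w + u = u.
Proof.
  intros Hu Hw [Huw Hwu].
  assert (R1 : add_regular R (u + w)).
  { apply bi_r. apply idem_reg; exact Hu. apply dme. apply dv_refl. exact Hwu. }
  assert (UW : (u + w) + (u + w) = u + w) by (apply idem_sum; assumption).
  assert (D1 : dv R (u + w) u) by (apply dme; [apply dv_refl | exact Hwu]).
  assert (R2 : add_regular R (u + w + u)).
  { apply bi_l. apply idem_reg; exact Hu. apply dme. exact D1. apply dv_refl. }
  assert (Zi : (u + w + u) + (u + w + u) = u + w + u) by (apply idem_sum; assumption).
  set (z := u + w + u) in *.
  assert (D2 : dv R z u) by (apply dme; [exact D1 | apply dv_refl]).
  destruct D2 as [n [s [t D]]]. rewrite (mp_idem R n u Hu) in D.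
  assert (B1 : u = s + u + (w + u + t)) by (rewrite D at 1; unfold z; ac).
  destruct (st_R _ _ _ B1) as [r Hr].
  assert (ZU : z + u = u). { apply (lid R z u (t + r) Zi). rewrite Hr at 1. unfold z. ac. }
  assert (B2 : u = (s + u + w) + u + t) by (rewrite D at 1; unfold z; ac).
  destruct (st_L _ _ _ B2) as [r' Hr'].
  assert (UZ : u + z = u). { apply (rid R z u (r' + s) Zi). rewrite Hr' at 1. unfold z. ac. }
  assert (UZ' : u + z = z). { apply (lid R u z (w + u) Hu). unfold z. ac. }
  rewrite <- UZ'. exact UZ.
Qed.

Lemma rh_add2 a b c : rh a b -> rh a c -> rh a (b + c).
Proof.
  intros H1 H2. apply rh_trans with (a + a). apply rh_sym, rh_aa.
  apply rh_trans with (b + a). apply rh_addr; exact H1. apply rh_addl; exact H2.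
Qed.
Lemma rh_mul2 a b c : rh a b -> rh a c -> rh a (b * c).
Proof.
  intros H1 H2. apply rh_trans with (a * a). apply rh_sym, rh_sq.
  apply rh_trans with (b * a). apply rh_mulr; exact H1. apply rh_mull; exact H2.
Qed.

Section Class.
Variable a : R.
Definition Kc b := rh a b /\ add_regular R b.

Lemma K_add b c : Kc b -> rh a c -> Kc (b + c) /\ Kc (c + b) /\ Kc (b * c) /\ Kc (c * b).
Proof.
  intros [Hab Hb] Hac.
  assert (Hbc : rh b c) by (apply rh_trans with a; [apply rh_sym|]; assumption).
  destruct Hbc as [Dbc Dcb].
  split; [|split; [|split]]; split.
  - apply rh_add2; assumption.
  - apply bi_r. exact Hb. apply dme. apply dv_refl. exact Dcb.
  - apply rh_add2; assumption.
  - apply bi_l. exact Hb. apply dme. exact Dcb. apply dv_refl.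
  - apply rh_mul2; assumption.
  - apply reg_mulr; exact Hb.
  - apply rh_mul2; assumption.
  - apply reg_mull; exact Hb.
Qed.

Lemma cr_facts b y : b = b + y + b -> b + y = y + b ->
  (b + y) + (b + y) = b + y /\ b + (b + y) = b /\ (b + y) + b = b /\ rh b (b + y) /\ rh b (y + b + y)
  /\ (y + b + y) + b = b + y.
Proof.
  intros Y1 Y2.
  assert (Ei : (b + y) + (b + y) = b + y) by (rewrite sadd_assoc, <- Y1; reflexivity).
  assert (BE : b + (b + y) = b) by (rewrite Y2, sadd_assoc; symmetry; exact Y1).
  assert (EB : (b + y) + b = b) by (symmetry; exact Y1).
  split; [|split; [|split; [|split; [|split]]]]; try assumption; try split.
  - exists 1, (b + y), y. simpl. ac.
  - exists 0, b, (y + b). simpl. transitivity (b + (y + b) + (y + b)). nrm. rewrite <- !Y1. reflexivity.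
    rewrite <- Y2. reflexivity.
  - exists 0, y, y. simpl. ac.
  - exists 0, b, b. simpl. replace (b + (y + b + y) + b) with (b + y + b + y + b) by ac. rewrite <- Y1. exact Y1.
  - rewrite Y2. replace (y + b + y + b) with (y + (b + y + b)) by ac. rewrite <- Y1. reflexivity.
Qed.

Lemma K_cr b : Kc b -> compl_regular_in R Kc b.
Proof.
  intros [Hab Hb]. destruct Hb as [x Hx]. destruct (Hgv b x Hx) as [y [Y1 Y2]].
  destruct (cr_facts b y Y1 Y2) as [Ei [BE [EB [Hbe [Hby Hyb]]]]].
  exists (y + b + y). split; [split|split; [|split]].
  - apply rh_trans with b; assumption.
  - exists b. replace (y + b + y + b + (y + b + y)) with (y + (b + y + b) + y + b + y) by ac.
    rewrite <- Y1. replace (y + b + y + b + y) with (y + (b + y + b) + y) by ac. rewrite <- Y1. reflexivity.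
  - replace (b + (y + b + y) + b) with (b + y + b + y + b) by ac. rewrite <- Y1. exact Y1.
  - replace (b + (y + b + y)) with (b + y + b + y) by ac. rewrite <- Y1. symmetry. exact Hyb.
  - replace (b + (y + b + y)) with (b + y + b + y) by ac. rewrite <- Y1. apply qm; assumption.
Qed.

Lemma K_J b c : Kc b -> Kc c -> in_J_ideal R Kc b c.
Proof.
  intros Kb Kc'. pose proof Kb as [Hab Hb]. pose proof Kc' as [Hac Hc].
  destruct Hb as [x Hx]. destruct (Hgv b x Hx) as [y [Y1 Y2]].
  destruct Hc as [x' Hx']. destruct (Hgv c x' Hx') as [y' [Y1' Y2']].
  destruct (cr_facts b y Y1 Y2) as [Ei [BE [EB [Hbe [Hby Hyb]]]]].
  destruct (cr_facts c y' Y1' Y2') as [Ei' [BE' [EB' [Hce [Hcy Hyc]]]]].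
  right; right; right.
  exists (b + (y' + c + y')), (b + y). split; [split|split; [split|]].
  - apply rh_add2. exact Hab. apply rh_trans with c; assumption.
  - apply (K_add b (y' + c + y') Kb). apply rh_trans with c; assumption.
  - apply rh_trans with b; assumption.
  - apply idem_reg; exact Ei.
  - assert (HR : (b + y) + (c + y') + (b + y) = b + y).
    { apply rb. exact Ei. exact Ei'.
      apply rh_trans with b. apply rh_sym; exact Hbe.
      apply rh_trans with c. apply rh_trans with a. apply rh_sym; exact Hab. exact Hac. exact Hce. }
    replace (b + (y' + c + y') + c + (b + y)) with (b + ((y' + c + y') + c) + (b + y)) by ac.
    rewrite Hyc. symmetry.
    transitivity (b + (b + y) + (c + y') + (b + y)). rewrite BE. reflexivity.
    replace (b + (b + y) + (c + y') + (b + y)) with (b + ((b + y) + (c + y') + (b + y))) by ac.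
    rewrite HR. exact BE.
Qed.

Lemma K_nil t : rh a t -> exists n, 0 < n /\ Kc (nmul n t).
Proof.
  intro Ht. destruct (pireg R Hq t) as [k [z [P1 _]]].
  exists (S k). split. lia. split.
  - apply rh_trans with t. exact Ht. apply rh_mp.
  - exists z. exact P1.
Qed.

End Class.

Theorem construct : b_lattice_nilext_rsr R.
Proof.
  exists rh. split; [|split].
  - split; [exact rh_refl|]. split; [exact rh_sym|]. split; [exact rh_trans|].
    intros a b c H. split; [|split; [|split]]; [apply rh_addr|apply rh_addl|apply rh_mulr|apply rh_mull]; exact H.
  - split; [exact rh_sq|]. split; [exact rh_aa|]. exact rh_comm.
  - intro a.
    assert (ST : subsemiring R (rh a)).
    { split. exists a. apply rh_refl. intros b c Hb Hc. split. apply rh_add2; assumption. apply rh_mul2; assumption. }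
    assert (SK : subsemiring R (Kc a)).
    { split.
      - destruct (K_nil a a (rh_refl a)) as [n [_ Hn]]. exists (nmul n a). exact Hn.
      - intros b c Hb Hc. destruct (K_add a b c Hb (proj1 Hc)) as [H1 [_ [H3 _]]]. split; assumption. }
    split. exact ST.
    exists (Kc a). split.
    + split. split. exact SK. split.
      * intros b Hb. apply K_cr. exact Hb.
      * intros b c Hb Hc. split; apply K_J; assumption.
      * intros e f He Hf Hee Hff. unfold add_idem in *.
        apply idem_sum; try assumption. apply (K_add a e f He (proj1 Hf)).
    + split. exact ST. split. exact SK. split.
      * intros b Hb. exact (proj1 Hb).
      * split.
        -- intros b x Hb Hx. exact (K_add a b x Hb Hx).
        -- intros t Ht. apply K_nil. exact Ht.
Qed.

End Cons.


Section II.
Variable R : semiring.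
Implicit Types a b c d e f g h p q r s t u v w x y z : R.
Notation mp := (nmul' R).

Lemma ii_hid :
  (forall e f : R, add_idem e -> add_idem f ->
        exists n, 0 < n /\ nmul n (e + f) = nmul (n + 1) (e + f)) ->
  forall e f, e + e = e -> f + f = f ->
  (exists y, e + f = e + f + y + (e + f) /\ e + f + y = y + (e + f)) -> e + f + (e + f) = e + f.
Proof.
  intros H2 e f He Hf [y [Y1 Y2]].
  destruct (H2 e f He Hf) as [n [Hn Hnn]].
  set (a := e + f) in *.
  destruct n as [|n]; [lia|].
  replace (S n + 1)%nat with (S (S n)) in Hnn by lia.
  change (mp n a = mp (S n) a) in Hnn.
  destruct (gv_idem_mp R a y n Y1 Y2) as [_ E2].
  assert (HA : a + y + a = a) by (symmetry; exact Y1).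
  assert (E : a = a + y).
  { transitivity (a + y + a). exact Y1.
    rewrite E2. rewrite <- sadd_assoc, <- mp_Sr, <- Hnn. reflexivity. }
  rewrite E. rewrite sadd_assoc, <- Y1. reflexivity.
Qed.

End II.

Section III.
Variable R : semiring.
Implicit Types a b c d e f g h p q r s t u v w x y z : R.
Notation mp := (nmul' R).
Hypothesis H3 : forall a x : R, a = a + x + a -> a = a + nmul 2 x + nmul 2 a.

Lemma H3' a x : a = a + x + a -> a = a + (x + x) + (a + a).
Proof. intro H. exact (H3 a x H). Qed.

Lemma inv_pair a x0 : a = a + x0 + a -> a = a + (x0 + a + x0) + a /\ (x0 + a + x0) = (x0 + a + x0) + a + (x0 + a + x0).
Proof.
  intro H0. split.
  - rewrite H0 at 1. rewrite H0 at 1. ac.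
  - replace (x0 + a + x0 + a + (x0 + a + x0)) with (x0 + (a + x0 + a) + (x0 + a + x0)) by ac. rewrite <- H0.
    replace (x0 + a + (x0 + a + x0)) with (x0 + (a + x0 + a) + x0) by ac. rewrite <- H0. reflexivity.
Qed.

Lemma iii_gv a x0 : a = a + x0 + a -> exists y, a = a + y + a /\ a + y = y + a.
Proof.
  intro H0. destruct (inv_pair a x0 H0) as [A1 A2].
  set (x := x0 + a + x0) in *. clearbody x.
  pose proof (H3' a x A1) as B1. pose proof (H3' x a A2) as B2.
  set (h := a + x + x + a).
  assert (HA : h + a = a). { unfold h. symmetry. rewrite B1 at 1. ac. }
  assert (AH : a + h = a).
  { transitivity (a + x + a). 2: symmetry; exact A1.
    transitivity (a + (x + (a + a) + (x + x)) + a). 2: rewrite <- B2; reflexivity.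
    replace (a + (x + (a + a) + (x + x)) + a) with ((a + x + a) + a + x + x + a) by ac. rewrite <- A1. unfold h. ac. }
  assert (AXH : a + x + h = h).
  { unfold h. replace (a + x + (a + x + x + a)) with ((a + x + a) + x + x + a) by ac. rewrite <- A1. reflexivity. }
  assert (HXA : h + x + a = h).
  { unfold h. replace (a + x + x + a + x + a) with (a + x + x + (a + x + a)) by ac. rewrite <- A1. reflexivity. }
  exists (h + x + h). split; [|].
  - replace (a + (h + x + h) + a) with ((a + h) + x + (h + a)) by ac. rewrite AH, HA. exact A1.
  - replace (a + (h + x + h)) with ((a + h) + x + h) by ac. rewrite AH, AXH.
    replace (h + x + h + a) with (h + x + (h + a)) by ac. rewrite HA, HXA. reflexivity.
Qed.

Lemma H_idem_eq u v : u + u = u -> v + v = v -> Lplus R u v -> Rplus R u v -> u = v.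
Proof.
  intros Hu Hv [L1 _] [_ R2].
  assert (A : u = v \/ u + v = u).
  { destruct L1 as [E|[x E]]. left; exact E. right. rewrite E. rewrite <- sadd_assoc, Hv. reflexivity. }
  assert (B : u = v \/ u + v = v).
  { destruct R2 as [E|[y E]]. left; symmetry; exact E. right. rewrite E. rewrite sadd_assoc, Hu. reflexivity. }
  destruct A as [A|A]. exact A. destruct B as [B|B]. exact B. rewrite <- A. exact B.
Qed.

Lemma is_m_1 a : add_regular R a -> forall m, is_m R a m -> m = 1%nat.
Proof.
  intros Ha m [Hm [_ Hmin]]. specialize (Hmin 1%nat ltac:(lia) Ha). lia.
Qed.

Hypothesis Hst : forall b : R, Hstar (b * b) b.
Hypothesis Haq : add_quasi_regular R.

Lemma iii_sq h : h + h = h -> h * h = h.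
Proof.
  intro Hh.
  assert (Hhh : h * h + h * h = h * h) by (rewrite <- smul_addr, Hh; reflexivity).
  destruct (Hst h) as [[m1 [n1 [M1 [N1 L]]]] [m2 [n2 [M2 [N2 Rr]]]]].
  assert (Rh : add_regular R h) by (exists h; rewrite !Hh; reflexivity).
  assert (Rhh : add_regular R (h * h)) by (exists (h * h); rewrite !Hhh; reflexivity).
  rewrite (is_m_1 _ Rhh m1 M1), (is_m_1 _ Rh n1 N1) in L.
  rewrite (is_m_1 _ Rhh m2 M2), (is_m_1 _ Rh n2 N2) in Rr.
  apply H_idem_eq; assumption.
Qed.

Lemma iii_cr b y : b = b + y + b -> b + y = y + b -> b * (b + y) = b + y.
Proof.
  intros Y1 Y2. set (h := b + y).
  assert (Hh : h + h = h) by (unfold h; rewrite sadd_assoc, <- Y1; reflexivity).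
  assert (HH : h * h = h) by (apply iii_sq; exact Hh).
  assert (HB : h + b = b) by (unfold h; symmetry; exact Y1).
  assert (BHi : b * h + b * h = b * h) by (rewrite <- smul_addr, Hh; reflexivity).
  assert (E1 : h + b * h = b * h). { rewrite <- HH at 1. rewrite <- smul_addl, HB. reflexivity. }
  assert (E2 : h = y * h + b * h). { rewrite <- HH at 1. unfold h at 1. rewrite Y2, smul_addl. reflexivity. }
  assert (E3 : h + b * h = h). { rewrite E2 at 1 3. rewrite <- sadd_assoc, BHi. reflexivity. }
  rewrite <- E1. exact E3.
Qed.

Lemma iii_qcr : quasi_compl_regular R.
Proof.
  intro a. destruct (Haq a) as [n [Hn [x Hx]]].
  destruct (iii_gv _ x Hx) as [y [Y1 Y2]].
  exists n. split. exact Hn. exists y. split. exact I. split. exact Y1. split. exact Y2.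
  apply iii_cr; assumption.
Qed.

Lemma iii_hid e f : e + e = e -> f + f = f ->
  (exists y, e + f = e + f + y + (e + f) /\ e + f + y = y + (e + f)) -> e + f + (e + f) = e + f.
Proof.
  intros He Hf [y [Y1 Y2]].
  set (a := e + f) in *.
  assert (AF : a + f = a) by (unfold a; rewrite <- sadd_assoc, Hf; reflexivity).
  assert (EA : e + a = a) by (unfold a; rewrite sadd_assoc, He; reflexivity).
  assert (AYA : a + y + a = a) by (symmetry; exact Y1).
  set (x := f + (y + a + y) + e).
  assert (X : a = a + x + a).
  { unfold x. replace (a + (f + (y + a + y) + e) + a) with ((a + f) + y + a + y + (e + a)) by ac.
    rewrite AF, EA. rewrite AYA, AYA. reflexivity. }
  pose proof (H3' a x X) as B.
  assert (C : a + (x + x) + (a + a) = a + a).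
  { unfold x. replace (a + (f + (y + a + y) + e + (f + (y + a + y) + e)) + (a + a))
      with ((a + f) + y + a + y + (e + f) + y + a + y + (e + a) + a) by ac.
    fold a. rewrite AF, EA. rewrite !AYA. reflexivity. }
  rewrite C in B. symmetry. exact B.
Qed.

End III.


Lemma ex_least (P : nat -> Prop) : (exists n, 0 < n /\ P n) ->
  exists m, 0 < m /\ P m /\ forall k, 0 < k -> P k -> m <= k.
Proof.
  intros [n [Hn Pn]]. revert Hn Pn. induction n as [n IH] using lt_wf_ind. intros Hn Pn.
  destruct (classic (exists k, 0 < k /\ k < n /\ P k)) as [[k [Hk [Hkn Pk]]]|Hno].
  - exact (IH k Hkn Hk Pk).
  - exists n. split; [exact Hn|]. split; [exact Pn|].
    intros k Hk Pk. destruct (le_lt_dec n k) as [|Hlt]; [assumption|].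
    exfalso. apply Hno. exists k. auto.
Qed.

Section I.
Variable R : semiring.
Implicit Types a b c d e f g h p q r s t u v w x y z : R.
Notation mp := (nmul' R).
Variable rho : R -> R -> Prop.
Hypothesis Hc : congruence R rho.
Hypothesis Hb : quotient_b_lattice R rho.
Hypothesis Hk : forall a, subsemiring R (rho a) /\ exists K, rect_skew_ring R K /\ nil_extension R (rho a) K.

Lemma rf a : rho a a. Proof. exact (proj1 Hc a). Qed.
Lemma sy a b : rho a b -> rho b a. Proof. exact (proj1 (proj2 Hc) a b). Qed.
Lemma tr a b c : rho a b -> rho b c -> rho a c. Proof. exact (proj1 (proj2 (proj2 Hc)) a b c). Qed.
Lemma cpr a b c : rho a b -> rho (a + c) (b + c). Proof. intro H. exact (proj1 (proj2 (proj2 (proj2 Hc)) a b c H)). Qed.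
Lemma cpl a b c : rho a b -> rho (c + a) (c + b). Proof. intro H. exact (proj1 (proj2 (proj2 (proj2 (proj2 Hc)) a b c H))). Qed.
Lemma rcomm a b : rho (a + b) (b + a). Proof. exact (proj2 (proj2 Hb) a b). Qed.
Lemma ridem a : rho (a + a) a. Proof. exact (proj1 (proj2 Hb) a). Qed.
Lemma rsq a : rho (a * a) a. Proof. exact (proj1 Hb a). Qed.

Lemma rabs x y : rho (x + y + x) (x + y).
Proof.
  rewrite <- sadd_assoc. apply tr with (x + (x + y)). apply cpl, rcomm.
  rewrite sadd_assoc. apply cpr, ridem.
Qed.

Lemma rreg t x : t = t + x + t -> rho t (x + t).
Proof.
  intro Ht. assert (H : rho (t + x + t) (x + t)) by (apply tr with (t + x); [apply rabs|apply rcomm]).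
  rewrite <- Ht in H. exact H.
Qed.

Lemma i_qcr : quasi_compl_regular R.
Proof.
  intro a. destruct (Hk a) as [_ [K [[[_ [CR _]] _] [_ [_ [_ [_ Nil]]]]]]].
  destruct (Nil a (rf a)) as [n [Hn Kn]]. destruct (CR _ Kn) as [x [_ H]].
  exists n. split. exact Hn. exists x. split. exact I. exact H.
Qed.

Let Hq := i_qcr.

Lemma pad_J (K : R -> Prop) x z r : x = x + r + x -> in_J_ideal R K x z -> exists al be, x = al + z + be.
Proof.
  intros Hx HJ.
  assert (X2 : x = (x + r) + x + (r + x)). { rewrite Hx at 1. rewrite Hx at 1. ac. }
  destruct HJ as [E|[[a0 [_ E]]|[[b0 [_ E]]|[a0 [b0 [_ [_ E]]]]]]].
  - exists (x + r), (r + x). rewrite X2 at 1. rewrite E at 2. reflexivity.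
  - exists (x + r + a0), (r + x). rewrite X2 at 1. rewrite E at 2. ac.
  - exists (x + r), (b0 + (r + x)). rewrite X2 at 1. rewrite E at 2. ac.
  - exists (x + r + a0), (b0 + (r + x)). rewrite X2 at 1. rewrite E at 2. ac.
Qed.

Section K.
Variable K : R -> Prop.
Hypothesis HK : rect_skew_ring R K.

Lemma K_sub : subsemiring R K. Proof. exact (proj1 (proj1 HK)). Qed.
Lemma K_plus x y : K x -> K y -> K (x + y). Proof. intros. apply (proj2 K_sub); assumption. Qed.
Lemma K_cr' x : K x -> compl_regular_in R K x. Proof. exact (proj1 (proj2 (proj1 HK)) x). Qed.
Lemma K_J' x y : K x -> K y -> in_J_ideal R K x y. Proof. intros. apply (proj2 (proj2 (proj1 HK)) x y); assumption. Qed.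
Lemma K_id x y : K x -> K y -> x + x = x -> y + y = y -> (x + y) + (x + y) = x + y.
Proof. intros. apply (proj2 HK); assumption. Qed.

Lemma rbK x y : K x -> K y -> x + x = x -> y + y = y -> x + y + x = x.
Proof.
  intros Kx Ky Hx Hy.
  assert (Kxy : K (x + y)) by (apply K_plus; assumption).
  assert (Ixy : (x + y) + (x + y) = x + y) by (apply K_id; assumption).
  assert (Kz : K (x + y + x)) by (apply K_plus; assumption).
  assert (Zi : (x + y + x) + (x + y + x) = x + y + x) by (apply K_id; assumption).
  set (z := x + y + x) in *.
  assert (Xr : x = x + x + x) by (rewrite !Hx; reflexivity).
  destruct (pad_J K x z x Xr (K_J' x z Kx Kz)) as [al [be D]].
  assert (B1 : x = al + x + (y + x + be)) by (rewrite D at 1; unfold z; ac).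
  destruct (st_R R Hq _ _ _ B1) as [r Hr].
  assert (ZU : z + x = x). { apply (lid R z x (be + r) Zi). rewrite Hr at 1. unfold z. ac. }
  assert (B2 : x = (al + x + y) + x + be) by (rewrite D at 1; unfold z; ac).
  destruct (st_L R Hq _ _ _ B2) as [r' Hr'].
  assert (UZ : x + z = x). { apply (rid R z x (r' + al) Zi). rewrite Hr' at 1. unfold z. ac. }
  assert (UZ' : x + z = z). { apply (lid R x z (y + x) Hx). unfold z. ac. }
  rewrite <- UZ'. exact UZ.
Qed.

Lemma rb3K x y z : K x -> K y -> K z -> x + x = x -> y + y = y -> z + z = z -> x + y + z = x + z.
Proof.
  intros Kx Ky Kz Hx Hy Hz.
  assert (Kyz : K (y + z)) by (apply K_plus; assumption).
  assert (Iyz : (y + z) + (y + z) = y + z) by (apply K_id; assumption).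
  assert (E1 : z + x + z = z) by (apply rbK; assumption).
  assert (E2 : x + (y + z) + x = x) by (apply rbK; assumption).
  rewrite <- E1 at 1. replace (x + y + (z + x + z)) with (x + (y + z) + x + z) by ac. rewrite E2. reflexivity.
Qed.

Lemma K_reg x : K x -> exists r, x = x + r + x.
Proof. intro Kx. destruct (K_cr' x Kx) as [r [_ [H _]]]. exists r. exact H. Qed.

End K.

Lemma plus_mp t s k : t + s = t -> t + mp k s = t.
Proof. intro H. induction k. exact H. rewrite mp_S, sadd_assoc, H. exact IHk. Qed.

Lemma regK a K : nil_extension R (rho a) K -> forall t, rho a t -> add_regular R t -> K t.
Proof.
  intros [_ [_ [_ [Bi Nil]]]] t Ht [x Hx].
  assert (H1 : rho a (x + t)) by (apply tr with t; [exact Ht|apply rreg; exact Hx]).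
  destruct (Nil _ H1) as [n [Hn Kn]]. destruct n as [|n]; [lia|].
  change (K (mp n (x + t))) in Kn.
  assert (E : t + (x + t) = t) by (rewrite sadd_assoc; symmetry; exact Hx).
  pose proof (plus_mp t (x + t) n E) as E2.
  destruct (Bi _ _ Kn Ht) as [_ [K2 _]]. rewrite E2 in K2. exact K2.
Qed.

Lemma rho_mp a k : rho a (mp k a).
Proof.
  induction k. apply rf. simpl. apply tr with (a + a). apply sy, ridem. apply cpl. exact IHk.
Qed.

Lemma i_h2 e f : add_idem e -> add_idem f -> exists n, 0 < n /\ nmul n (e + f) = nmul (n + 1) (e + f).
Proof.
  intros He Hf. unfold add_idem in *. set (g := e + f).
  destruct (Hk g) as [_ [K [HK [_ [_ [Sub [Bi Nil]]]]]]].
  destruct (Nil g (rf g)) as [n [Hn Kn]]. destruct n as [|n]; [lia|].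
  change (K (mp n g)) in Kn. set (p := mp n g) in *.
  exists (S n). split. lia. replace (S n + 1)%nat with (S (S n)) by lia.
  change (p = mp (S n) g).
  destruct (K_cr' K HK p Kn) as [z [Kz [P1 [P2 _]]]].
  set (i := p + z).
  assert (Ki : K i) by (apply (K_plus K HK); assumption).
  assert (Ii : i + i = i) by (unfold i; rewrite sadd_assoc, <- P1; reflexivity).
  assert (EG : e + g = g) by (unfold g; rewrite sadd_assoc, He; reflexivity).
  assert (GF : g + f = g) by (unfold g; rewrite <- sadd_assoc, Hf; reflexivity).
  assert (EP : e + p = p) by (apply mp_lfix; exact EG).
  assert (PF : p + f = p) by (apply mp_rfix; exact GF).
  assert (EI : e + i = i) by (unfold i; rewrite sadd_assoc, EP; reflexivity).
  assert (IF : i + f = i) by (unfold i; rewrite P2, <- sadd_assoc, PF; reflexivity).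
  assert (PI : p + i = p) by (unfold i; rewrite P2, sadd_assoc; symmetry; exact P1).
  assert (Ti : rho g i) by (apply Sub; exact Ki).
  assert (Tw : rho g (i + e)).
  { apply tr with (g + e). 2: apply cpr; exact Ti.
    apply sy. unfold g. apply rabs. }
  assert (Tu : rho g (f + i)).
  { apply tr with (f + g). 2: apply cpl; exact Ti.
    unfold g. apply tr with (f + e). apply rcomm. apply sy. replace (f + (e + f)) with (f + e + f) by ac. apply rabs. }
  assert (Kw : K (i + e)).
  { destruct (Bi i (i + e) Ki Tw) as [K1 _]. rewrite sadd_assoc, Ii in K1. exact K1. }
  assert (Ku : K (f + i)).
  { destruct (Bi i (f + i) Ki Tu) as [_ [K1 _]]. rewrite <- sadd_assoc, Ii in K1. exact K1. }
  assert (Iw : (i + e) + (i + e) = i + e).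
  { replace (i + e + (i + e)) with (i + (e + i) + e) by ac. rewrite EI, Ii. reflexivity. }
  assert (Iu : (f + i) + (f + i) = f + i).
  { replace (f + i + (f + i)) with (f + (i + f) + i) by ac. rewrite IF, <- sadd_assoc, Ii. reflexivity. }
  assert (R3 : i + (i + e) + (f + i) = i + (f + i)) by (apply (rb3K K HK); assumption).
  assert (GP : g + p = p + g) by (unfold p; rewrite <- mp_S, mp_Sr; reflexivity).
  rewrite mp_S. fold p. rewrite GP. symmetry.
  transitivity (p + g + i). rewrite <- GP, <- sadd_assoc, PI. reflexivity.
  transitivity (p + i + (i + e) + (f + i)).
  { replace (p + i + (i + e) + (f + i)) with (p + (i + i) + e + f + i) by ac. rewrite Ii, PI. unfold g. ac. }
  replace (p + i + (i + e) + (f + i)) with (p + (i + (i + e) + (f + i))) by ac. rewrite R3.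
  replace (p + (i + (f + i))) with (p + i + f + i) by ac. rewrite PI, PF, PI. reflexivity.
Qed.


Lemma i_c3 a x : a = a + x + a -> a = a + nmul 2 x + nmul 2 a.
Proof.
  intro Hx. change (a = a + (x + x) + (a + a)).
  destruct (Hk a) as [_ [K [HK NE]]].
  assert (Tf : rho a (a + x)).
  { assert (H : rho (a + x + a) (a + x)) by apply rabs. rewrite <- Hx in H. exact H. }
  assert (Tg : rho a (x + a)) by (apply tr with (a + x); [exact Tf|apply rcomm]).
  assert (If : (a + x) + (a + x) = a + x) by (rewrite sadd_assoc, <- Hx; reflexivity).
  assert (Ig : (x + a) + (x + a) = x + a).
  { replace (x + a + (x + a)) with (x + (a + x + a)) by ac. rewrite <- Hx. reflexivity. }
  assert (Kf : K (a + x)) by (apply (regK a K NE); [exact Tf|exists (a + x); rewrite !If; reflexivity]).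
  assert (Kg : K (x + a)) by (apply (regK a K NE); [exact Tg|exists (x + a); rewrite !Ig; reflexivity]).
  pose proof (rbK K HK _ _ Kf Kg If Ig) as RB.
  transitivity (a + x + (x + a) + (a + x) + a).
  - rewrite RB. exact Hx.
  - replace (a + x + (x + a) + (a + x) + a) with (a + x + (x + a) + (a + x + a)) by ac. rewrite <- Hx. ac.
Qed.

Lemma i_aqr : add_quasi_regular R.
Proof.
  intro a. destruct (Hq a) as [n [Hn [x [_ [H _]]]]]. exists n. split. exact Hn. exists x. exact H.
Qed.

Lemma ex_m a : exists m, is_m R a m.
Proof.
  destruct (ex_least (fun n => add_regular R (nmul n a)) (i_aqr a)) as [m Hm]. exists m. exact Hm.
Qed.

Lemma core b m1 m2 : is_m R (b * b) m1 -> is_m R b m2 ->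
  Lplus R (nmul m1 (b * b)) (nmul m2 b) /\ Rplus R (nmul m1 (b * b)) (nmul m2 b).
Proof.
  intros [Hm1 [Reg1 Min1]] [Hm2 [Reg2 _]].
  destruct (Hk b) as [_ [K [HK NE]]]. pose proof NE as [_ [SK [_ [_ _]]]].
  destruct m1 as [|k1]; [lia|]. destruct m2 as [|k2]; [lia|].
  change (Lplus R (mp k1 (b * b)) (mp k2 b) /\ Rplus R (mp k1 (b * b)) (mp k2 b)).
  change (add_regular R (mp k1 (b * b))) in Reg1. change (add_regular R (mp k2 b)) in Reg2.
  set (u := mp k2 b) in *. set (v := mp k1 (b * b)) in *.
  assert (Ku : K u) by (apply (regK b K NE); [apply rho_mp|exact Reg2]).
  assert (Kv : K v).
  { apply (regK b K NE); [|exact Reg1]. apply tr with (b * b). apply sy, rsq. apply rho_mp. }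
  destruct (K_cr' K HK u Ku) as [z [Kz [U1 [U2 U3]]]].
  assert (Kuu : K (u * u)) by exact (proj2 (proj2 SK u u Ku Ku)).
  assert (UI : u + (u + z) = u) by (rewrite U2, sadd_assoc; symmetry; exact U1).
  assert (IU : (u + z) + u = u) by (symmetry; exact U1).
  assert (UUI : u * u = u * u + (u + z)). { rewrite <- U3. rewrite <- smul_addr, UI. reflexivity. }
  assert (IUU : u + z = u * u + u * z). { rewrite <- smul_addr. symmetry. exact U3. }
  assert (Ii : (u + z) + (u + z) = u + z) by (rewrite sadd_assoc, <- U1; reflexivity).
  assert (Ki : K (u + z)) by (apply (K_plus K HK); assumption).
  set (i := u + z) in *.
  set (uu := u * u) in *.
  assert (Ri : i = i + i + i) by (rewrite !Ii; reflexivity).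
  destruct (K_reg K HK uu Kuu) as [ruu Ruu].
  destruct (K_reg K HK v Kv) as [rv Rv].
  destruct (pad_J K i uu i Ri (K_J' K HK i uu Ki Kuu)) as [al [be D1]].
  assert (B1 : i = (al + uu) + i + be). { rewrite D1 at 1. rewrite UUI at 1. ac. }
  destruct (st_L R Hq _ _ _ B1) as [r1 Hr1].
  assert (WI : i = (r1 + al) + uu). { rewrite Hr1 at 1. rewrite UUI at 2. ac. }
  destruct (pad_J K uu i ruu Ruu (K_J' K HK uu i Kuu Ki)) as [al' [be' D2]].
  assert (B2 : uu = al' + uu + (u * z + be')). { rewrite D2 at 1. rewrite IUU at 1. ac. }
  destruct (st_R R Hq _ _ _ B2) as [r2 Hr2].
  assert (UUR : uu = i + (be' + r2)). { rewrite Hr2 at 1. rewrite IUU. ac. }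
  assert (HL : (k1 <= k2 * k2 + k2 + k2)%nat).
  { assert (Hr : add_regular R (nmul (S (k2 * k2 + k2 + k2)) (b * b))).
    { change (add_regular R (mp (k2 * k2 + k2 + k2) (b * b))). rewrite <- mp_prod. fold u. fold uu.
      exists ruu. exact Ruu. }
    specialize (Min1 (S (k2 * k2 + k2 + k2)) ltac:(lia) Hr). lia. }
  assert (UV : uu = v \/ exists s1, uu = v + s1 /\ uu = s1 + v).
  { destruct (Nat.eq_dec k1 (k2 * k2 + k2 + k2)) as [E|NE'].
    - left. unfold uu, u, v. rewrite mp_prod, E. reflexivity.
    - right. exists (mp (k2 * k2 + k2 + k2 - k1 - 1) (b * b)). unfold uu, u, v. rewrite mp_prod. split.
      + rewrite <- mp_add. f_equal. lia.
      + rewrite <- mp_add. f_equal. lia. }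
  assert (VL : exists w4, v = w4 + uu \/ v = uu).
  { destruct UV as [E|[s1 [E1 E2]]]. exists v. right. symmetry. exact E.
    destruct (pad_J K v uu rv Rv (K_J' K HK v uu Kv Kuu)) as [al3 [be3 D3]].
    assert (B3 : v = (al3 + s1) + v + be3). { rewrite D3 at 1. rewrite E2. ac. }
    destruct (st_L R Hq _ _ _ B3) as [r3 Hr3]. exists (r3 + al3). left.
    rewrite Hr3 at 1. rewrite E2. ac. }
  assert (VR : exists w3, v = uu + w3 \/ v = uu).
  { destruct UV as [E|[s1 [E1 E2]]]. exists v. right. symmetry. exact E.
    destruct (pad_J K v uu rv Rv (K_J' K HK v uu Kv Kuu)) as [al3 [be3 D3]].
    assert (B3 : v = al3 + v + (s1 + be3)). { rewrite D3 at 1. rewrite E1. ac. }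
    destruct (st_R R Hq _ _ _ B3) as [r3 Hr3]. exists (be3 + r3). left.
    rewrite Hr3 at 1. rewrite E1. ac. }
  assert (UVL : exists y, u = y + v).
  { destruct UV as [E|[s1 [E1 E2]]].
    - exists (u + (r1 + al)). rewrite <- E. rewrite <- UI at 1. rewrite WI at 1. ac.
    - exists (u + (r1 + al) + s1). rewrite <- UI at 1. rewrite WI at 1. rewrite E2. ac. }
  assert (UVR : exists y, u = v + y).
  { destruct UV as [E|[s1 [E1 E2]]].
    - exists (u * z + u). rewrite <- E. rewrite <- IU at 1. rewrite IUU at 1. ac.
    - exists (s1 + (u * z + u)). rewrite <- IU at 1. rewrite IUU at 1. rewrite E1. ac. }
  assert (IZ : i = z + u) by (unfold i; exact U2).
  split; split.
  - right. destruct VL as [w4 [E|E]].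
    + exists (w4 + uu + z). rewrite E at 1. rewrite UUI at 1. rewrite IZ. ac.
    + exists (uu + z). rewrite E at 1. rewrite UUI at 1. rewrite IZ. ac.
  - right. exact UVL.
  - right. destruct VR as [w3 [E|E]].
    + exists (z + (be' + r2) + w3). rewrite E at 1. rewrite UUR at 1. unfold i. ac.
    + exists (z + (be' + r2)). rewrite E at 1. rewrite UUR at 1. unfold i. ac.
  - right. exact UVR.
Qed.

Lemma i_hstar b : Hstar (b * b) b.
Proof.
  destruct (ex_m (b * b)) as [m1 M1]. destruct (ex_m b) as [m2 M2].
  destruct (core b m1 m2 M1 M2) as [L Rr].
  split; exists m1, m2; (split; [exact M1|split; [exact M2|assumption]]).
Qed.

End I.

Theorem theorem3p4 (S : semiring) :
  (b_lattice_nilext_rsr S <->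
     (quasi_compl_regular S /\
      forall e f : S, add_idem e -> add_idem f ->
        exists n, 0 < n /\ nmul n (e + f) = nmul (n + 1) (e + f)))
  /\
  (b_lattice_nilext_rsr S <->
     (add_quasi_regular S /\
      (forall b : S, Hstar (b * b) b) /\
      (forall a x : S, a = a + x + a -> a = a + nmul 2 x + nmul 2 a))).
Proof.
  split; split.
  - intros [rho [Hc [Hb Hk]]]. split.
    + eapply i_qcr; eassumption.
    + intros e f He Hf. eapply i_h2; eassumption.
  - intros [Hq H2]. apply (construct S Hq (gv S Hq) (ii_hid S H2)).
  - intros [rho [Hc [Hb Hk]]]. split; [|split].
    + eapply i_aqr; eassumption.
    + intro b. eapply i_hstar; eassumption.
    + intros a x H. eapply i_c3; eassumption.
  - intros [Haq [Hst H3]].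
    apply (construct S (iii_qcr S H3 Hst Haq) (iii_gv S H3) (iii_hid S H3)).
Qed.
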